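(* Let $\sigma>0$, let $\kappa_0,\kappa_1$ satisfy $0<\kappa_1<\kappa_0<1$, and let $t_1\in(0,\sigma)$. Set \[ \lambda^\star(\kappa_0,\kappa_1,t_1):=\frac{\kappa_0-\kappa_1}{g_*(\kappa_1,\kappa_0)\int_0^{t_1}A^+(0,\xi)\,d\xi} \] and let $0<\gamma_1\le(\kappa_0-\kappa_1)/t_1$. Then for every $\lambda>\lambda^\star(\kappa_0,\kappa_1,t_1)$, the solution $(x(t),y(t))$ of \[ x'=y,\qquad y'=-\lambda a^+(t)g(x) \] with $x(0)=\kappa_0$, $y(0)=0$ satisfies $x(t_1)<\kappa_1$ and $y(t_1)<-\gamma_1$.
   Context: $a\in L^1(0,\sigma)$ with positive part $a^+$, and $A^+(t',t''):=\int_{t'}^{t''}a^+(\xi)\,d\xi$; it is assumed that $A^+(0,t)>0$ for all $t\in(0,\sigma]$. $g\colon\mathbb{R}\to[0,+\infty)$ is the extension by zero outside $[0,1]$ of a locally Lipschitz continuous function $g\colon[0,1]\to[0,+\infty)$ with $g(0)=g(1)=0$, $g(s)>0$ for $0<s<1$ and $\lim_{s\to0^+}g(s)/s=0$. For $0\le\kappa'<\kappa''\le1$, $g_*(\kappa',\kappa''):=\min_{s\in[\kappa',\kappa'']}g(s)$. Solutions are in the Carathéodory sense on $[0,\sigma]$. *)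

(* Defs.v *)
From HB Require Import structures.
From mathcomp Require Import all_boot all_order all_algebra.
From mathcomp Require Import all_classical all_reals all_analysis.
Set Implicit Arguments. Unset Strict Implicit. Unset Printing Implicit Defensive.
Import Order.TTheory GRing.Theory Num.Theory.
Import numFieldNormedType.Exports.
Local Open Scope classical_set_scope.
Local Open Scope ring_scope.

Definition pos_part {R : realType} (a : R -> R) : R -> R :=
  fun t => Num.max (a t) 0.

Definition integ {R : realType} (t' t'' : R) (f : R -> R) : R :=
  Rintegral (@lebesgue_measure R) `[t', t''] f.

Definition Aplus {R : realType} (a : R -> R) (t' t'' : R) : R :=
  integ t' t'' (pos_part a).

(* g_*(k', k'') := min_{s in [k', k'']} g s (taken as inf; attained since g is continuous) *)
Definition gstar {R : realType} (g : R -> R) (k' k'' : R) : R :=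
  inf [set g s | s in `[k', k'']].

(* Standing hypotheses on g: g is the extension by zero outside [0,1] of a
   locally Lipschitz g : [0,1] -> [0,+oo) with g(0)=g(1)=0, g>0 on (0,1),
   g(s)/s -> 0 as s -> 0+. *)
Definition g_hyp {R : realType} (g : R -> R) : Prop :=
  (forall s, (s < 0 \/ 1 < s) -> g s = 0) /\
  (forall s, 0 <= s <= 1 -> 0 <= g s) /\
  (forall s, 0 <= s <= 1 -> exists delta : R, 0 < delta /\ exists L : R,
      forall u v, 0 <= u <= 1 -> 0 <= v <= 1 -> `|u - s| < delta -> `|v - s| < delta ->
        `|g u - g v| <= L * `|u - v|) /\
  g 0 = 0 /\ g 1 = 0 /\
  (forall s, 0 < s < 1 -> 0 < g s) /\
  ((fun s => g s / s) @ (0 : R)^'+ --> (0 : R)).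

Definition a_hyp {R : realType} (sigma : R) (a : R -> R) : Prop :=
  (@lebesgue_measure R).-integrable `[0, sigma] (EFin \o a) /\
  (forall t, 0 < t <= sigma -> 0 < Aplus a 0 t).

(* (x, y) is a Caratheodory solution on [0, sigma] of
     x' = y, y' = - lambda a^+(t) g(x), x(0) = k0, y(0) = 0,
   written in the equivalent integral (absolutely continuous) form. *)
Definition carath_sol {R : realType} (sigma lambda : R) (a g : R -> R) (k0 : R)
    (x y : R -> R) : Prop :=
  (@lebesgue_measure R).-integrable `[0, sigma] (EFin \o y) /\
  (@lebesgue_measure R).-integrable `[0, sigma]
      (EFin \o (fun s => pos_part a s * g (x s))) /\
  (forall t, 0 <= t <= sigma -> x t = k0 + integ 0 t y) /\
  (forall t, 0 <= t <= sigma ->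
      y t = - (lambda * integ 0 t (fun s => pos_part a s * g (x s)))).

Definition lambda_star {R : realType} (a g : R -> R) (k0 k1 t1 : R) : R :=
  (k0 - k1) / (gstar g k1 k0 * integ 0 t1 (fun xi => Aplus a 0 xi)).

(* Main.v *)
Require Import Defs.
From HB Require Import structures.
From mathcomp Require Import all_boot all_order all_algebra.
From mathcomp Require Import all_classical all_reals all_analysis.
From mathcomp Require Import lra.
Import Order.TTheory GRing.Theory Num.Theory.
Import numFieldNormedType.Exports.
Local Open Scope classical_set_scope.
Local Open Scope ring_scope.

Section H.
Context {R : realType}.
Notation mu := (@lebesgue_measure R).

Lemma Rint_sub (A B : set R) (f : R -> R) : measurable A -> measurable B ->
  A `<=` B -> mu.-integrable B (EFin \o f) -> (forall s, B s -> 0 <= f s) ->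
  Rintegral mu A f <= Rintegral mu B f.
Proof.
move=> mA mB AB iB f0.
have iA : mu.-integrable A (EFin \o f) by apply: integrableS iB.
rewrite /Rintegral fine_le//; try exact: integrable_fin_num.
apply: ge0_subset_integral => //; first exact: measurable_int iB.

Qed.

Lemma integ_cst (a b c : R) : a <= b -> integ a b (fun _ => c) = c * (b - a).
Proof.
move=> ab; rewrite /integ Rintegral_cst //= lebesgue_measure_itv /=.
case: ifPn => [_|]; first by [].
rewrite lte_fin -leNgt => ba; have -> : b = a by apply/eqP; rewrite eq_le ab ba.
by rewrite subrr.
Qed.

Lemma cst_int (a b c : R) : mu.-integrable `[a, b] (EFin \o (fun _ : R => c)).
Proof.
apply: continuous_compact_integrable; first exact: segment_compact.
by apply: continuous_in_subspaceT => x _; exact: cst_continuous.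
Qed.

Lemma integN (a b : R) f : mu.-integrable `[a, b] (EFin \o f) ->
  integ a b (fun s => - f s) = - integ a b f.
Proof.
move=> fi; rewrite /integ.
have := @RintegralB _ _ _ mu `[a, b] (fun _ => 0) f (measurable_itv _) (cst_int a b 0) fi.
under eq_Rintegral do rewrite sub0r.
move=> ->; rewrite Rintegral_cst // mul0r sub0r //.
Qed.
End H.
Section G.
Context {R : realType}.

Lemma g_cont (g : R -> R) s : g_hyp g -> 0 < s < 1 -> {for s, continuous g}.
Proof.
move=> [_ [_ [hL _]]] /andP[s0 s1].
have hs01 : 0 <= s <= 1 by rewrite (ltW s0) (ltW s1).
have [d [d0 [L hl]]] := hL s hs01.
apply/cvgrPdist_lt => e e0.
pose r := Num.min (Num.min d (Num.min s (1 - s))) (e / (`|L| + 1)).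
have r0 : 0 < r.
  rewrite !lt_min d0 s0 subr_gt0 s1 /= divr_gt0 //.
apply/nbhs_ballP; exists r => // t; rewrite /ball /= => hst.
move: hst; rewrite !lt_min => /andP[/andP[hd /andP[hs h1]] he].
have ht : 0 <= t <= 1.
  move: hs h1; rewrite !ltr_norml => /andP[a1 a2] /andP[b1 b2].
  apply/andP; split; lra.
have := hl s t hs01 ht; rewrite subrr normr0 => /(_ d0).
rewrite distrC => /(_ hd) H.
apply: (le_lt_trans H).
have -> : e = e / (`|L| + 1) * (`|L| + 1) by rewrite mulfVK // gt_eqF // (lt_le_trans ltr01) // lerDr.
have hL0 : 0 <= `|s - t| by [].
apply: (@le_lt_trans _ _ (`|L| * `|s - t|)).
  exact: (ler_wpM2r hL0 (ler_norm L)).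
rewrite [X in _ < X]mulrC; apply: (@le_lt_trans _ _ ((`|L| + 1) * `|s - t|)).
  by apply: (ler_wpM2r hL0); rewrite lerDl.
by rewrite ltr_pM2l // (lt_le_trans ltr01) // lerDr.
Qed.
End G.
Section G2.
Context {R : realType}.
Local Open Scope classical_set_scope.
Lemma gstar_pos (g : R -> R) k1 k0 : g_hyp g -> 0 < k1 -> k1 <= k0 -> k0 < 1 ->
  0 < gstar g k1 k0.
Proof.
move=> hg k10 k10' k01.
have cg : {within `[k1, k0], continuous g}.
  apply: continuous_in_subspaceT => s; rewrite in_setE /= in_itv /= => /andP[a b].
  apply: g_cont => //; apply/andP; split; lra.
have [c cin cmin] := EVT_min k10' cg.
have gc : 0 < g c.
  move: cin; rewrite in_itv /= => /andP[a b].
  case: hg => _ [_ [_ [_ [_ [hp _]]]]]; apply: hp; apply/andP; split; lra.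
apply: (lt_le_trans gc); apply: lb_le_inf.
  by exists (g k1), k1 => //=; rewrite in_itv /= lexx k10'.
by move=> _ [s sin <-]; apply: cmin.
Qed.
End G2.
Section M.
Local Open Scope classical_set_scope.
Theorem lemma2p2 (R : realType) (sigma : R) (a g : R -> R)
  (k0 k1 t1 gamma1 lambda : R) (x y : R -> R) :
  0 < sigma -> a_hyp sigma a -> g_hyp g ->
  0 < k1 -> k1 < k0 -> k0 < 1 ->
  0 < t1 -> t1 < sigma ->
  0 < gamma1 -> gamma1 <= (k0 - k1) / t1 ->
  lambda_star a g k0 k1 t1 < lambda ->
  carath_sol sigma lambda a g k0 x y ->
  x t1 < k1 /\ y t1 < - gamma1.
Proof.
move=> s0 [aint Apos] hg k10 k1k0 k01 t10 t1s g10 g1le lst [yint [hint [xeq yeq]]].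
pose mu := (@lebesgue_measure R).
set pa := pos_part a.
set h := fun s => pa s * g (x s).
have gnn : forall s, 0 <= g s.
  move=> s; case: hg => hout [hnn _].
  case: (lerP 0 s) => s0'; case: (lerP s 1) => s1'.
  - by apply: hnn; rewrite s0' s1'.
  - by rewrite hout //; right.
  - by rewrite hout //; left.
  - by rewrite hout //; left.
have pann : forall s, 0 <= pa s by move=> s; rewrite /pa /pos_part le_max lexx orbT.
have hnn : forall s, 0 <= h s by move=> s; rewrite mulr_ge0.
have paint : mu.-integrable `[0, sigma] (EFin \o pa).
  have -> : EFin \o pa = funepos (EFin \o a).
    by apply/funext => s; rewrite funeposE /= /pa /pos_part EFin_max.
  by apply: integrable_funepos.
have subint : forall f u, 0 <= u <= sigma -> mu.-integrable `[0, sigma] (EFin \o f) ->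
    mu.-integrable `[0, u] (EFin \o f).
  move=> f u /andP[u0 us] fi; apply: integrableS fi => //.
  by move=> z /=; rewrite !in_itv /= => /andP[z0 zu]; rewrite z0 /=; apply: le_trans zu us.
have gpos := @gstar_pos _ g k1 k0 hg k10 (ltW k1k0) k01.
have Inn : 0 <= integ 0 t1 (fun xi => Aplus a 0 xi).
  by apply: Rintegral_ge0 => s _; apply: Rintegral_ge0 => z _; apply: pann.
have lstar0 : 0 <= lambda_star a g k0 k1 t1.
  by rewrite /lambda_star divr_ge0 // ?subr_ge0 ?(ltW k1k0) // mulr_ge0 // ltW.
have lam0 : 0 < lambda by apply: le_lt_trans lst.
have ymono : forall s t, 0 <= s -> s <= t -> t <= sigma -> y t <= y s.
  move=> s t s0' st ts; rewrite !yeq; [|lra|lra].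
  rewrite lerN2 ler_pM2l //; apply: Rint_sub => //.
  - by move=> z /=; rewrite !in_itv /= => /andP[z0 zu]; rewrite z0 /=; apply: le_trans zu st.
  - by apply: subint => //; lra.
  - by move=> z _; apply: hnn.
have yle0 : forall t, 0 <= t <= sigma -> y t <= 0.
  move=> t ht; rewrite yeq // oppr_le0; apply: mulr_ge0; first exact: ltW.
  by apply: Rintegral_ge0 => z _; apply: hnn.
have negint : forall u, 0 <= u <= sigma ->
    mu.-integrable `[0, u] (EFin \o (fun s => - y s)).
  move=> u hu; have -> : EFin \o (fun s => - y s) = -%E \o (EFin \o y).
    by apply/funext => z /=; rewrite EFinN.
  by apply: integrableN => //; apply: subint.
have xmono : forall s t, 0 <= s -> s <= t -> t <= sigma -> x t <= x s.
  move=> s t s0' st ts; rewrite !xeq; [|lra|lra].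
  rewrite lerD2l -lerN2 -!integN; [|apply: subint => //; lra|apply: subint => //; lra].
  apply: Rint_sub => //.
  - by move=> z /=; rewrite !in_itv /= => /andP[z0 zu]; rewrite z0 /=; apply: le_trans zu st.
  - by apply: negint; lra.
  - move=> z /=; rewrite in_itv /= => /andP[z0 zt]; rewrite oppr_ge0; apply: yle0; lra.
have x0 : x 0 = k0.
  by rewrite xeq ?lexx ?(ltW s0) // /integ set_itv1 Rintegral_set1 addr0.
pose F := fun t => Aplus a 0 t.
have Fc : {within `[0, t1], continuous F}.
  have ht1 : 0 <= t1 <= sigma by rewrite (ltW t10) (ltW t1s).
  exact: (parameterized_integral_continuous (ltW t10) (subint pa t1 ht1 paint)).
have Fint : mu.-integrable `[0, t1] (EFin \o F).
  by apply: continuous_compact_integrable => //; exact: segment_compact.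
have Fnn : forall t, 0 <= F t.
  by move=> t; apply: Rintegral_ge0 => z _; apply: pann.
have Fmono : forall s t, 0 <= s -> s <= t -> t <= sigma -> F s <= F t.
  move=> s t s0' st ts; apply: Rint_sub => //.
  - by move=> z /=; rewrite !in_itv /= => /andP[z0 zu]; rewrite z0 /=; apply: le_trans zu st.
  - by apply: subint => //; lra.
have Ipos : 0 < integ 0 t1 F.
  have hh : 0 < F (t1 / 2) by apply: Apos; apply/andP; split; lra.
  have sub : `[t1 / 2, t1] `<=` `[0, t1].
    by move=> z /=; rewrite !in_itv /= => /andP[z0 zu]; rewrite zu andbT; lra.
  apply: (@lt_le_trans _ _ (integ (t1 / 2) t1 F)); last first.
    apply: Rint_sub => //; move=> z /=; rewrite in_itv /= => /andP[z0 zu]; exact: Fnn.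
  apply: (@lt_le_trans _ _ (integ (t1 / 2) t1 (fun _ => F (t1 / 2)))).
    by rewrite integ_cst; [apply: mulr_gt0 => //; lra | lra].
  apply: le_Rintegral => //.
  - exact: cst_int.
  - by apply: integrableS Fint.
  - by move=> z /=; rewrite in_itv /= => /andP[z0 zu]; apply: Fmono; lra.
have hx1 : x t1 < k1.
  rewrite ltNge; apply/negP => hx.
  have xin : forall s, 0 <= s <= t1 -> k1 <= x s <= k0.
    move=> s /andP[s0' st]; apply/andP; split.
      by apply: (le_trans hx); apply: xmono => //; lra.
    by rewrite -x0; apply: xmono => //; lra.
  have hb : has_lbound [set g s | s in `[k1, k0]] by exists 0 => _ [s _ <-].
  have gge : forall s, 0 <= s <= t1 -> gstar g k1 k0 <= g (x s).
    move=> s hs; apply: (ge_inf hb); exists (x s) => //=.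
    by rewrite in_itv /=; apply: xin.
  have yb : forall t, 0 <= t <= t1 -> y t <= - (lambda * gstar g k1 k0) * F t.
    move=> t /andP[t0 tt1]; rewrite yeq; last by apply/andP; split; lra.
    have ht : 0 <= t <= sigma by apply/andP; split; lra.
    rewrite mulNr lerN2 -mulrA ler_pM2l // /F /Aplus /integ -RintegralZl //;
      last by apply: subint.
    apply: le_Rintegral => //.
    - have -> : EFin \o (fun s => gstar g k1 k0 * pos_part a s) =
                (fun s => ((gstar g k1 k0)%:E * (EFin \o pa) s)%E).
        by apply/funext => z /=; rewrite EFinM.
      by apply: integrableZl => //; apply: subint.
    - by apply: subint.
    - move=> z /=; rewrite in_itv /= => /andP[z0 zt].
      rewrite mulrC; apply: ler_wpM2l; first exact: pann.
      by apply: gge; apply/andP; split; lra.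
  have : x t1 <= k0 - lambda * gstar g k1 k0 * integ 0 t1 F.
    rewrite xeq; last by apply/andP; split; lra.
    rewrite lerD2l.
    have -> : - (lambda * gstar g k1 k0 * integ 0 t1 F) =
              integ 0 t1 (fun s => - (lambda * gstar g k1 k0) * F s).
      by rewrite /integ RintegralZl // mulNr.
    apply: le_Rintegral => //.
    - by apply: subint => //; apply/andP; split; lra.
    - have -> : EFin \o (fun s => - (lambda * gstar g k1 k0) * F s) =
                (fun s => ((- (lambda * gstar g k1 k0))%:E * (EFin \o F) s)%E).
        by apply/funext => z /=; rewrite EFinM.
      by apply: integrableZl.
  move: lst; rewrite /lambda_star ltr_pdivrMr; last exact: mulr_gt0.
  rewrite mulrA => lst2 hx2.
  have := le_trans hx hx2; lra.
split => //.
have : k0 + y t1 * t1 <= x t1.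
  rewrite xeq; last by apply/andP; split; lra.
  rewrite lerD2l.
  have := @integ_cst _ 0 t1 (y t1) (ltW t10); rewrite subr0 => <-.
  apply: le_Rintegral => //.
  - exact: cst_int.
  - by apply: subint => //; apply/andP; split; lra.
  - by move=> z /=; rewrite in_itv /= => /andP[z0 zt]; apply: ymono => //; lra.
move=> hk.
have h1 : y t1 * t1 < k1 - k0 by lra.
have h2 : y t1 < (k1 - k0) / t1 by rewrite ltr_pdivlMr.
apply: (lt_le_trans h2).
rewrite lerNr; apply: (le_trans g1le).
by rewrite -mulNr opprB.
Qed.
End M.
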